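(* Let $\mathbb{F}\in\{\mathbb{R},\mathbb{C}\}$, $A\in\mathbb{F}^{m\times n}$ with $\|A\|_{\infty,col}\le1$, $x_0\in\mathbb{F}^n$ with $S=\mathrm{supp}\,x_0$ and $\#S=K$, $\epsilon\in\mathbb{F}^m$, $b=Ax_0+\epsilon$, and assume $\beta_K>0$. If $$|x_{0,j}|>\Big(1+\frac{1}{\beta_K}\Big)\|\epsilon\|_2\quad\text{for all }j\in S,$$ then the oracle solution $x'=x_S$ is a strict local minimizer of $\mathcal{K}_{K,reg}$ with $\mathrm{supp}(x')=\mathrm{supp}(x_0)$. Moreover $|x'_j|>\|\epsilon\|_2$ for $j\in S$, $\|Ax'-b\|_2\le\|\epsilon\|_2$ and $\|x'-x_0\|_2\le\|\epsilon\|_2/\beta_K$.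
   Context: $\|A\|_{\infty,col}=\max_i\|a_i\|_2$ over the columns $a_i$ of $A$. $\mathrm{card}(x)$ is the number of nonzero entries, $P_K=\{x:\mathrm{card}(x)\le K\}$, $\iota_{P_K}$ its indicator function; $\beta_k=\inf\{\|Ax\|_2/\|x\|_2:x\ne0,\ \mathrm{card}(x)\le k\}$. $\mathcal{Q}_2(\iota_{P_K})$ is the function such that $\mathcal{Q}_2(\iota_{P_K})(x)+\|x\|^2$ is the lower semicontinuous convex envelope of $\iota_{P_K}(x)+\|x\|^2$; explicitly, with $\tilde x$ the entries of $x$ sorted so that $|\tilde x_j|$ is non-increasing, $\mathcal{Q}_2(\iota_{P_K})(x)=\frac{1}{k_*}\big(\sum_{j>K-k_*}|\tilde x_j|\big)^2-\sum_{j>K-k_*}|\tilde x_j|^2$, where $k_*$ is the largest $k\in\{1,\dots,K\}$ with $\sum_{j>K-k}|\tilde x_j|-k|\tilde x_{K+1-k}|\ge0$. $\mathcal{K}_{K,reg}(x)=\mathcal{Q}_2(\iota_{P_K})(x)+\|Ax-b\|_2^2$. $A_S$ is $A$ with columns outside $S$ set to zero; the oracle solution is $x_S=(A_S^*A_S)^\dagger A_S^*b$ ($\dagger$ Moore–Penrose inverse, $A^*$ conjugate transpose). *)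

(* Defs.v *)
From HB Require Import structures.
From mathcomp Require Import all_boot all_order all_algebra.
From mathcomp Require Import all_classical all_reals.
From mathcomp.real_closed Require Import complex.

Set Implicit Arguments.
Unset Strict Implicit.
Unset Printing Implicit Defensive.

Import Order.TTheory GRing.Theory Num.Theory.
Local Open Scope ring_scope.
Local Open Scope classical_set_scope.

(* Generic setting: scalars F (= R or R[i]) with a real-valued modulus
   [ab : F -> R] and a conjugation [cj : F -> F].  The theorem instantiates
   (F, ab, cj) concretely as (R, Num.norm, id) and (R[i], normc, conjc). *)
Section Generic.
Variables (R : realType) (F : comNzRingType) (ab : F -> R) (cj : F -> F).

Definition norm2 (k : nat) (v : 'cV[F]_k) : R :=
  Num.sqrt (\sum_(i < k) ab (v i 0) ^+ 2).

Definition colnorm_inf (m n : nat) (A : 'M[F]_(m, n)) : R :=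
  \big[Num.max/0]_(i < n) norm2 (col i A).

Definition supp (n : nat) (x : 'cV[F]_n) : {set 'I_n} := [set i | x i 0 != 0].
Definition card_ (n : nat) (x : 'cV[F]_n) : nat := #|supp x|.

Definition beta (m n : nat) (A : 'M[F]_(m, n)) (k : nat) : R :=
  inf [set norm2 (A *m x) / norm2 x | x in [set x : 'cV[F]_n | x != 0 /\ (card_ x <= k)%N]].

(* moduli |x~_1| >= |x~_2| >= ... (0-indexed list) *)
Definition sorted_abs (n : nat) (x : 'cV[F]_n) : seq R :=
  sort (fun a b : R => b <= a) [seq ab (x i 0) | i <- enum 'I_n].

(* sum_{j > K-k} |x~_j| (1-indexed j), i.e. 0-indexed positions K-k .. n-1 *)
Definition tail_sum (n : nat) (x : 'cV[F]_n) (K k : nat) : R :=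
  \sum_(K - k <= j < n) (sorted_abs x)`_j.
Definition tail_sumsq (n : nat) (x : 'cV[F]_n) (K k : nat) : R :=
  \sum_(K - k <= j < n) ((sorted_abs x)`_j) ^+ 2.

(* k_* = largest k in {1..K} with sum_{j>K-k}|x~_j| - k |x~_{K+1-k}| >= 0 *)
Definition kstar (n : nat) (x : 'cV[F]_n) (K : nat) : nat :=
  \max_(k < K.+1 | (0 < k)%N && (0 <= tail_sum x K k - k%:R * (sorted_abs x)`_(K - k)))
     (k : nat).

Definition Q2 (n : nat) (K : nat) (x : 'cV[F]_n) : R :=
  (kstar x K)%:R^-1 * (tail_sum x K (kstar x K)) ^+ 2 - tail_sumsq x K (kstar x K).

Definition Kreg (m n : nat) (A : 'M[F]_(m, n)) (b : 'cV[F]_m) (K : nat)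
  (x : 'cV[F]_n) : R := Q2 K x + norm2 (A *m x - b) ^+ 2.

Definition restr_cols (m n : nat) (A : 'M[F]_(m, n)) (S : {set 'I_n}) : 'M[F]_(m, n) :=
  \matrix_(i, j) (if j \in S then A i j else 0).

Definition adjmx (m n : nat) (A : 'M[F]_(m, n)) : 'M[F]_(n, m) := map_mx cj A^T.

(* X is the Moore-Penrose inverse of M (Penrose conditions; it exists and is unique) *)
Definition is_MP_inverse (m n : nat) (M : 'M[F]_(m, n)) (X : 'M[F]_(n, m)) : Prop :=
  [/\ M *m X *m M = M, X *m M *m X = X,
      adjmx (M *m X) = M *m X & adjmx (X *m M) = X *m M].

Definition strict_local_min (n : nat) (f : 'cV[F]_n -> R) (x' : 'cV[F]_n) : Prop :=
  exists2 d : R, 0 < d & forall x, x != x' -> norm2 (x - x') < d -> f x' < f x.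

Definition prop56_stmt : Prop :=
  forall (m n : nat) (A : 'M[F]_(m, n)) (x0 : 'cV[F]_n) (eps : 'cV[F]_m) (K : nat),
  colnorm_inf A <= 1 ->
  #|supp x0| = K ->
  let S := supp x0 in
  let b := A *m x0 + eps in
  0 < beta A K ->
  (forall j, j \in S -> (1 + (beta A K)^-1) * norm2 eps < ab (x0 j 0)) ->
  forall X : 'M[F]_n,
  is_MP_inverse (adjmx (restr_cols A S) *m restr_cols A S) X ->
  let x' := X *m adjmx (restr_cols A S) *m b in
  [/\ strict_local_min (Kreg A b K) x',
      supp x' = S,
      (forall j, j \in S -> norm2 eps < ab (x' j 0)),
      norm2 (A *m x' - b) <= norm2 eps
    & norm2 (x' - x0) <= norm2 eps / beta A K].

End Generic.

(* Main.v *)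
Require Import Defs.
From HB Require Import structures.
From mathcomp Require Import all_boot all_order all_algebra.
From mathcomp Require Import all_classical all_reals.
From mathcomp.real_closed Require Import complex.
From mathcomp Require Import lra ring.
Import Order.TTheory GRing.Theory Num.Theory.
Local Open Scope ring_scope.
Set Implicit Arguments.
Unset Strict Implicit.


Section SeqLemmas.
Variable R : realType.

Lemma sorted_count_pos (s : seq R) t :
  sorted (fun a b : R => b <= a) s ->
  forall j, (j < size s)%N -> (t < nth 0 s j) = (j < count (fun v : R => (t < v)%R) s)%N.
Proof.
elim: s => [|v s IH] //= Hs j Hj.
have Hs' := path_sorted Hs.
have Hmin : all (fun b => b <= v) s.
  by apply: (order_path_min _ Hs) => a b c Hba Hcb; apply: le_trans Hcb Hba.
case: (boolP (t < v)) => Htv.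
  case: j Hj => [|j] Hj //=.
  by rewrite IH // add1n ltnS.
have Hc : count (fun v0 => t < v0) s = 0%N.
  apply/eqP; rewrite -leqn0 leqNgt -has_count; apply/hasPn => w Hw.
  move/allP: Hmin => /(_ w Hw) Hwv; apply/negP => Htw.
  by move/negP: Htv; apply; apply: lt_le_trans Htw Hwv.
rewrite Hc /=; case: j Hj => [|j] Hj //=; first by rewrite (negbTE Htv).
apply/negbTE/negP => Ht.
have Hw : nth 0 s j \in s by apply: mem_nth.
move/allP: Hmin => /(_ _ Hw) Hwv.
by move/negP: Htv; apply; apply: lt_le_trans Ht Hwv.
Qed.

End SeqLemmas.

Section SA.
Variables (R : realType) (F : comNzRingType) (ab : F -> R).
Hypothesis ab_ge0 : forall z, 0 <= ab z.

Lemma sa_size n (x : 'cV[F]_n) : size (sorted_abs ab x) = n.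
Proof. by rewrite /sorted_abs size_sort size_map size_enum_ord. Qed.

Lemma sa_sorted n (x : 'cV[F]_n) : sorted (fun a b : R => b <= a) (sorted_abs ab x).
Proof. by apply: sort_sorted => a b; rewrite le_total. Qed.

Lemma sa_perm n (x : 'cV[F]_n) :
  perm_eq (sorted_abs ab x) [seq ab (x i 0) | i <- enum 'I_n].
Proof. by rewrite /sorted_abs; apply/permPl; apply: perm_sort. Qed.

Lemma sa_ge0 n (x : 'cV[F]_n) j : 0 <= (sorted_abs ab x)`_j.
Proof.
case: (ltnP j (size (sorted_abs ab x))) => Hj; last by rewrite nth_default.
have := mem_nth 0 Hj; rewrite (perm_mem (sa_perm x)) => /mapP [i _ ->].
exact: ab_ge0.
Qed.

Lemma sa_le n (x : 'cV[F]_n) i j : (i <= j)%N -> (j < n)%N ->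
  (sorted_abs ab x)`_j <= (sorted_abs ab x)`_i.
Proof.
move=> Hij Hj.
have H := @sorted_leq_nth _ (fun a b : R => b <= a) _ _ 0 _ (sa_sorted x).
apply: H => //.
- by move=> a b c Hba Hcb; apply: le_trans Hcb Hba.
- by rewrite inE sa_size (leq_ltn_trans Hij Hj).
- by rewrite inE sa_size.
Qed.

Lemma sa_thresh n (x : 'cV[F]_n) t (S : {set 'I_n}) :
  (forall j, (j \in S) = (t < ab (x j 0))) ->
  forall j, (j < n)%N -> (t < (sorted_abs ab x)`_j) = (j < #|S|)%N.
Proof.
move=> HS j Hj.
rewrite (sorted_count_pos t (sa_sorted x)) ?sa_size //.
congr (j < _)%N.
rewrite -sum1_count (perm_big _ (sa_perm x)) big_map big_enum_cond /=.
rewrite -sum1_card; apply: eq_bigl => i; by rewrite HS.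
Qed.


Lemma sa_tail n (x : 'cV[F]_n) t (S : {set 'I_n}) (f : R -> R) :
  (forall j, (j \in S) = (t < ab (x j 0))) ->
  \sum_(#|S| <= j < n) f (sorted_abs ab x)`_j = \sum_(j | j \notin S) f (ab (x j 0)).
Proof.
move=> HS.
have HSn : (#|S| <= n)%N by have := max_card (mem S); rewrite card_ord.
transitivity (\sum_(0 <= j < n | ~~ (t < (sorted_abs ab x)`_j)) f (sorted_abs ab x)`_j).
  rewrite [RHS](@big_cat_nat _ _ _ #|S|) /= ?leq0n //.
  have -> : \sum_(0 <= j < #|S| | ~~ (t < (sorted_abs ab x)`_j)) f (sorted_abs ab x)`_j = 0.
    rewrite big_nat_cond big1 // => j /andP [/andP [_ Hj] Hc].
    by move: Hc; rewrite (sa_thresh HS) ?Hj // (leq_trans Hj HSn).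
  rewrite add0r.
  rewrite [RHS]big_nat_cond [LHS]big_nat_cond; apply: eq_bigl => j.
  case: (ltnP j n) => Hjn; last by rewrite !andbF.
  by rewrite (sa_thresh HS) // !andbT -leqNgt andbb.
have E := big_nth 0 (r := sorted_abs ab x) (fun v => ~~ (t < v)) f.
rewrite sa_size in E; rewrite -E (perm_big _ (sa_perm x)) big_map big_enum_cond /=.
by apply: eq_bigl => j; rewrite HS.
Qed.

Lemma sumsq_le_sqsum (I : Type) (r : seq I) (P : pred I) (f : I -> R) :
  (forall i, P i -> 0 <= f i) ->
  \sum_(i <- r | P i) f i ^+ 2 <= (\sum_(i <- r | P i) f i) ^+ 2.
Proof.
move=> Hf; elim: r => [|i r IH]; first by rewrite !big_nil expr0n.
rewrite !big_cons; case: (boolP (P i)) => Pi //.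
have H0 : 0 <= \sum_(j <- r | P j) f j by apply: sumr_ge0.
have := Hf i Pi; nra.
Qed.

Lemma sumsq_le_sqsum_nat m k (f : nat -> R) :
  (forall i, (m <= i < k)%N -> 0 <= f i) ->
  \sum_(m <= i < k) f i ^+ 2 <= (\sum_(m <= i < k) f i) ^+ 2.
Proof.
move=> Hf; rewrite big_nat_cond [X in _ <= X ^+ 2]big_nat_cond.
apply: sumsq_le_sqsum => i /andP [Hi _]; exact: Hf.
Qed.

Lemma Q2_bound n (x : 'cV[F]_n) t (S : {set 'I_n}) :
  (forall j, (j \in S) = (t < ab (x j 0))) -> (0 < #|S|)%N ->
  exists a, t < a /\
   2 * a * (\sum_(j | j \notin S) ab (x j 0)) - (\sum_(j | j \notin S) ab (x j 0)) ^+ 2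
     - \sum_(j | j \notin S) ab (x j 0) ^+ 2 <= Q2 ab #|S| x /\
   (\sum_(j | j \notin S) ab (x j 0) = 0 -> \sum_(j | j \notin S) ab (x j 0) ^+ 2 = 0 ->
     Q2 ab #|S| x <= 0).
Proof.
move=> HS HK.
set K := #|S|.
set sig := \sum_(j | j \notin S) ab (x j 0).
set tau := \sum_(j | j \notin S) ab (x j 0) ^+ 2.
set s := sorted_abs ab x.
have HKn : (K <= n)%N by have := max_card (mem S); rewrite card_ord.
have Hsig : \sum_(K <= j < n) s`_j = sig by rewrite (@sa_tail n x t S id HS).
have Htau : \sum_(K <= j < n) s`_j ^+ 2 = tau by rewrite (@sa_tail n x t S (fun v => v ^+ 2) HS).
have sig0 : 0 <= sig by apply: sumr_ge0.
have tau_le : tau <= sig ^+ 2 by apply: sumsq_le_sqsum.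
have tau0 : 0 <= tau by apply: sumr_ge0 => i _; apply: sqr_ge0.
pose P := fun k : 'I_K.+1 => (0 < k)%N &&
   (0 <= tail_sum ab x K k - (k : nat)%:R * s`_(K - k)).
have HP : (0 < #|P|)%N.
  apply/card_gt0P.
  have H1 : (1 < K.+1)%N by rewrite ltnS.
  exists (Ordinal H1); rewrite unfold_in /= /tail_sum.
  have Hlt : (K - 1 < n)%N by rewrite subn1 (leq_trans _ HKn) // prednK.
  rewrite big_ltn // subn1 prednK // Hsig mul1r.
  by rewrite -/s addrAC subrr add0r.
have [k0 Pk0 Hk] := eq_bigmax_cond (fun k : 'I_K.+1 => (k : nat)) HP.
have Ek : kstar ab x K = k0 by rewrite /kstar; apply: Hk.
move: Pk0; rewrite unfold_in => /andP [k0pos Hcond].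
move: Ek Hcond; set k := (k0 : nat) => Ek Hcond.
have kK : (k <= K)%N by rewrite -ltnS ltn_ord.
set m := (K - k)%N in Hcond *.
have mK : (m < K)%N by rewrite /m ltn_subrL k0pos.
have mk : (K - m)%N = k by rewrite /m subKn.
have mn : (m < n)%N by apply: leq_trans mK HKn.
set a := s`_m in Hcond *.
have ta : t < a by rewrite /a (sa_thresh HS) // mn.
set p := \sum_(m <= j < K) s`_j.
set q := \sum_(m <= j < K) s`_j ^+ 2.
set D := \sum_(m <= j < K) (a - s`_j).
set E := \sum_(m <= j < K) (a - s`_j) ^+ 2.
have Hts : tail_sum ab x K k = p + sig.
  by rewrite /tail_sum -/m -/s (@big_cat_nat _ _ _ K) ?(ltnW mK) // Hsig.
have Htq : tail_sumsq ab x K k = q + tau.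
  by rewrite /tail_sumsq -/m -/s (@big_cat_nat _ _ _ K) ?(ltnW mK) // Htau.
have HQ : Q2 ab K x = (k%:R)^-1 * (p + sig) ^+ 2 - (q + tau).
  by rewrite /Q2 Ek Hts Htq.
have HD : D = k%:R * a - p by rewrite /D sumrB sumr_const_nat mk mulr_natl.
have HqE : q = k%:R * a ^+ 2 - 2 * a * D + E.
  rewrite /q /E /D.
  rewrite (eq_bigr (fun j => a ^+ 2 - 2 * a * (a - s`_j) + (a - s`_j) ^+ 2)); last first.
    by move=> j _; ring.
  by rewrite big_split /= sumrB sumr_const_nat mk -mulr_sumr; ring.
have D0 : 0 <= D.
  rewrite /D big_nat_cond; apply: sumr_ge0 => j /andP [/andP [Hmj HjK] _].
  by rewrite subr_ge0 /a sa_le // (leq_trans HjK HKn).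
have ED : E <= D ^+ 2.
  apply: sumsq_le_sqsum_nat => j /andP [Hmj HjK].
  by rewrite subr_ge0 /a sa_le // (leq_trans HjK HKn).
have E0 : 0 <= E by apply: sumr_ge0 => j _; apply: sqr_ge0.
have Hc : D <= sig by move: Hcond; rewrite Hts HD; lra.
have kpos : 0 < (k%:R : R) by rewrite ltr0n.
have HQ2 : Q2 ab K x = 2 * a * sig + (sig - D) ^+ 2 / k%:R - E - tau.
  rewrite HQ HqE.
  have -> : p = k%:R * a - D by rewrite HD; ring.
  by field; rewrite pnatr_eq0 -lt0n.
have Hfrac : 0 <= (sig - D) ^+ 2 / k%:R by apply: divr_ge0; [apply: sqr_ge0 | apply: ltW].
exists a; split => //; split.
  rewrite HQ2.
  have : D ^+ 2 <= sig ^+ 2 by rewrite ler_sqr //.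
  lra.
move=> Hs0 Ht0.
have HD0 : D = 0 by apply/le_anti; rewrite D0 andbT -Hs0.
rewrite HQ2 Hs0 Ht0 HD0 subrr expr0n /= mul0r; lra.
Qed.
End SA.


Section CS.
Variable R : realType.
Lemma sum3 (I : finType) (a b c : I -> R) :
  \sum_i (a i + b i - 2 * c i) = \sum_i a i + \sum_i b i - 2 * \sum_i c i.
Proof. by rewrite sumrB big_split -mulr_sumr. Qed.

Lemma CS_sq (I : finType) (al be : I -> R) :
  (\sum_i al i * be i) ^+ 2 <= (\sum_i al i ^+ 2) * (\sum_i be i ^+ 2).
Proof.
have H : 0 <= \sum_i \sum_j (al i * be j - al j * be i) ^+ 2.
  by apply: sumr_ge0 => i _; apply: sumr_ge0 => j _; apply: sqr_ge0.
have S1 : \sum_i \sum_j (al i ^+ 2 * be j ^+ 2) = (\sum_i al i ^+ 2) * (\sum_i be i ^+ 2).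
  by rewrite mulr_suml; apply: eq_bigr => i _; rewrite mulr_sumr.
have S2 : \sum_i \sum_j (al j ^+ 2 * be i ^+ 2) = (\sum_i al i ^+ 2) * (\sum_i be i ^+ 2).
  by rewrite exchange_big.
have S3 : \sum_i \sum_j ((al i * be i) * (al j * be j)) = (\sum_i al i * be i) ^+ 2.
  by rewrite expr2 mulr_suml; apply: eq_bigr => i _; rewrite mulr_sumr.
have E : \sum_i \sum_j (al i * be j - al j * be i) ^+ 2 =
   \sum_i (\sum_j (al i ^+ 2 * be j ^+ 2) + \sum_j (al j ^+ 2 * be i ^+ 2)
     - 2 * \sum_j ((al i * be i) * (al j * be j))).
  apply: eq_bigr => i _; rewrite -sum3; apply: eq_bigr => j _; ring.
move: H; rewrite E sum3 S1 S2 S3; lra.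
Qed.

Lemma CS (I : finType) (al be : I -> R) :
  \sum_i al i * be i <= Num.sqrt (\sum_i al i ^+ 2) * Num.sqrt (\sum_i be i ^+ 2).
Proof.
rewrite -sqrtrM; last by apply: sumr_ge0 => i _; apply: sqr_ge0.
have [H|H] := boolP (0 <= \sum_i al i * be i); last first.
  apply: le_trans (sqrtr_ge0 _); rewrite leNgt; apply/negP => H'.
  by move/negP: H; apply; apply: ltW.
rewrite -[X in X <= _]ger0_norm // -sqrtr_sqr ler_sqrt ?CS_sq //.
by apply: mulr_ge0; apply: sumr_ge0 => i _; apply: sqr_ge0.
Qed.
End CS.

Lemma zh (V : zmodType) (a c e : V) : e = a - c - (a - (c + e)).
Proof. by rewrite opprB addrA (addrA (a - c)) subrK addrAC subrr add0r. Qed.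

Section Gen.
Variables (R : realType) (F : comNzRingType) (ab : F -> R) (cj : {rmorphism F -> F}) (re : F -> R).
Hypotheses (ab_ge0 : forall z, 0 <= ab z) (ab_eq0 : forall z, ab z = 0 -> z = 0) (ab0 : ab 0 = 0)
 (abM : forall z w, ab (z * w) = ab z * ab w) (abD : forall z w, ab (z + w) <= ab z + ab w)
 (abN : forall z, ab (- z) = ab z)
 (abcj : forall z, ab (cj z) = ab z) (cjK : forall z, cj (cj z) = z)
 (reD : forall z w, re (z + w) = re z + re w) (re0 : re 0 = 0)
 (ab_expand : forall z w, ab (z + w) ^+ 2 = ab z ^+ 2 + ab w ^+ 2 + 2 * re (cj z * w))
 (re_sq : forall z, re (cj z * z) = ab z ^+ 2)
 (re_le : forall z w, `|re (cj z * w)| <= ab z * ab w).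

Definition sq k (v : 'cV[F]_k) := \sum_i ab (v i 0) ^+ 2.
Definition ip k (v w : 'cV[F]_k) := \sum_i cj (v i 0) * w i 0.
Local Notation adj := (adjmx cj).
Local Notation nrm := (norm2 ab).

Lemma sq_ge0 k (v : 'cV[F]_k) : 0 <= sq v.
Proof. by apply: sumr_ge0 => i _; apply: sqr_ge0. Qed.

Lemma nrm_ge0 k (v : 'cV[F]_k) : 0 <= nrm v.
Proof. exact: sqrtr_ge0. Qed.

Lemma nrm_sq k (v : 'cV[F]_k) : nrm v ^+ 2 = sq v.
Proof. by rewrite /norm2 sqr_sqrtr // sq_ge0. Qed.

Lemma sq_eq0 k (v : 'cV[F]_k) : sq v = 0 -> v = 0.
Proof.
move=> /eqP; rewrite psumr_eq0 => [/allP H|i _]; last exact: sqr_ge0.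
apply/matrixP => i j; rewrite (ord1 j) mxE.
apply: ab_eq0; have := H i (mem_index_enum i); rewrite /= sqrf_eq0 => /eqP //.
Qed.

Lemma ab_le_nrm k (v : 'cV[F]_k) i : ab (v i 0) <= nrm v.
Proof.
rewrite -[X in X <= _]ger0_norm // -sqrtr_sqr ler_sqrt ?sq_ge0 //.
by rewrite /sq (bigD1 i) //= lerDl; apply: sumr_ge0 => j _; apply: sqr_ge0.
Qed.

Lemma re_sum (I : Type) (r : seq I) (P : pred I) (f : I -> F) :
  re (\sum_(i <- r | P i) f i) = \sum_(i <- r | P i) re (f i).
Proof. by apply: (big_morph re reD re0). Qed.

Lemma ab_sum (I : Type) (r : seq I) (P : pred I) (f : I -> F) :
  ab (\sum_(i <- r | P i) f i) <= \sum_(i <- r | P i) ab (f i).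
Proof.
elim: r => [|i r IH]; first by rewrite !big_nil ab0.
rewrite !big_cons; case: (P i) => //.
by apply: le_trans (abD _ _) _; rewrite lerD2l.
Qed.

Lemma sqD k (v w : 'cV[F]_k) : sq (v + w) = sq v + sq w + 2 * re (ip v w).
Proof.
rewrite /sq /ip re_sum mulr_sumr -!big_split /=; apply: eq_bigr => i _.
by rewrite mxE ab_expand.
Qed.

Lemma adjE m n (A : 'M[F]_(m, n)) i j : adj A i j = cj (A j i).
Proof. by rewrite /adjmx !mxE. Qed.

Lemma adjM m n p (A : 'M[F]_(m, n)) (B : 'M[F]_(n, p)) : adj (A *m B) = adj B *m adj A.
Proof. by rewrite /adjmx trmx_mul map_mxM. Qed.

Lemma adjK m n (A : 'M[F]_(m, n)) : adj (adj A) = A.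
Proof. by apply/matrixP => i j; rewrite !adjE cjK. Qed.

Lemma adjB m n (A B : 'M[F]_(m, n)) : adj (A - B) = adj A - adj B.
Proof. by apply/matrixP => i j; rewrite !mxE rmorphB. Qed.

Lemma adj1 n : adj (1%:M : 'M[F]_n) = 1%:M.
Proof. by apply/matrixP => i j; rewrite !mxE eq_sym; case: (i == j); rewrite ?rmorph1 ?rmorph0. Qed.

Lemma ip_adj m n (v : 'cV[F]_m) (M : 'M[F]_(m, n)) (w : 'cV[F]_n) :
  ip v (M *m w) = ip (adj M *m v) w.
Proof.
rewrite /ip; under eq_bigr do rewrite mxE mulr_sumr.
rewrite exchange_big /=; apply: eq_bigr => j _.
rewrite mxE rmorph_sum mulr_suml; apply: eq_bigr => i _.
by rewrite adjE rmorphM cjK mulrCA mulrA.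
Qed.

Lemma ip0 k (v : 'cV[F]_k) : ip v 0 = 0.
Proof. by rewrite /ip big1 // => i _; rewrite mxE mulr0. Qed.

Lemma ab_ip k (v w : 'cV[F]_k) : ab (ip v w) <= nrm v * nrm w.
Proof.
apply: le_trans (ab_sum _ _ _) _.
under eq_bigr do rewrite abM abcj.
exact: CS.
Qed.

Lemma DstarD m n (D : 'M[F]_(m, n)) : adj D *m D = 0 -> D = 0.
Proof.
move=> H; apply/matrixP => i j; rewrite mxE.
have : re ((adj D *m D) j j) = 0 by rewrite H mxE re0.
rewrite mxE re_sum.
under eq_bigr do rewrite adjE re_sq.
move=> /eqP; rewrite psumr_eq0 => [/allP Hk|k _]; last exact: sqr_ge0.
apply: ab_eq0; have := Hk i (mem_index_enum i); rewrite /= sqrf_eq0 => /eqP //.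
Qed.

Lemma MP_lemma m n (G : 'M[F]_(m, n)) (M Y : 'M[F]_n) :
  M = adj G *m G -> M *m Y *m M = M -> adj (Y *m M) = Y *m M ->
  G *m Y *m M = G.
Proof.
move=> HM H1 H2.
apply/eqP; rewrite -subr_eq0; apply/eqP; apply: DstarD.
have E : G *m Y *m M - G = G *m (Y *m M - 1%:M) by rewrite mulmxBr mulmx1 mulmxA.
rewrite E adjM adjB adj1 H2 mulmxA -(mulmxA _ (adj G)) -HM.
by rewrite -mulmxA mulmxBr mulmx1 (mulmxA M Y M) H1 subrr mulmx0.
Qed.

Lemma ipN k (v w : 'cV[F]_k) : ip v (- w) = - ip v w.
Proof. by rewrite /ip -sumrN; apply: eq_bigr => i _; rewrite mxE mulrN. Qed.

Lemma reN z : re (- z) = - re z.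
Proof. by apply/eqP; rewrite -subr_eq0 opprK addrC -reD subrr re0. Qed.

Lemma re_sym z w : re (cj z * w) = re (cj w * z).
Proof.
have H1 := ab_expand z w; have H2 := ab_expand w z.
rewrite addrC H1 in H2; lra.
Qed.

Lemma re_ipC k (v w : 'cV[F]_k) : re (ip v w) = re (ip w v).
Proof. by rewrite /ip !re_sum; apply: eq_bigr => i _; rewrite re_sym. Qed.

Lemma ip0l k (w : 'cV[F]_k) : ip 0 w = 0.
Proof. by rewrite /ip big1 // => i _; rewrite mxE rmorph0 mul0r. Qed.

Lemma sqN k (v : 'cV[F]_k) : sq (- v) = sq v.
Proof. by rewrite /sq; apply: eq_bigr => i _; rewrite mxE abN. Qed.

Lemma sq0 k : sq (0 : 'cV[F]_k) = 0.
Proof. by rewrite /sq big1 // => i _; rewrite mxE ab0 expr0n. Qed.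

Lemma nrm0 k : nrm (0 : 'cV[F]_k) = 0.
Proof. by rewrite /norm2 -/(sq 0) sq0 sqrtr0. Qed.

Lemma nrm_gt0 k (v : 'cV[F]_k) : v != 0 -> 0 < nrm v.
Proof.
move=> Hv; rewrite lt_neqAle nrm_ge0 andbT eq_sym; apply/eqP => H.
move/negP: Hv; apply; apply/eqP; apply: sq_eq0; by rewrite -nrm_sq H expr0n.
Qed.

Lemma nrm_le_sq k l (v : 'cV[F]_k) (w : 'cV[F]_l) : sq v <= sq w -> nrm v <= nrm w.
Proof. by move=> H; rewrite /norm2 ler_sqrt // sq_ge0. Qed.

Lemma beta_le m n (A : 'M[F]_(m, n)) K (h : 'cV[F]_n) :
  (card_ h <= K)%N -> beta ab A K * nrm h <= nrm (A *m h).
Proof.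
move=> Hc; have [->|Hh] := eqVneq h 0.
  by rewrite nrm0 mulr0 nrm_ge0.
have Hp := nrm_gt0 Hh.
rewrite -ler_pdivlMr //.
have := @ge_inf _ [set nrm (A *m x) / nrm x | x in [set x : 'cV[F]_n | x != 0 /\ (card_ x <= K)%N]].
apply.
  exists 0 => y [x [Hx _] <-]; apply: divr_ge0; exact: nrm_ge0.
by exists h.
Qed.

Theorem gen_main : prop56_stmt ab cj.
Proof.
move=> m n A x0 eps K Hcol HK S b Hbeta Hx0 X [HX1 HX2 HX3 HX4] x'.
set G := restr_cols A S in HX1 HX2 HX3 HX4 x' *.
set M := adj G *m G in HX1 HX2 HX3 HX4.
set e := nrm eps.
set be := beta ab A K in Hbeta Hx0 *.
have e0 : 0 <= e by apply: nrm_ge0.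
have K0 : (0 < K)%N.
  rewrite lt0n; apply/negP => /eqP K0'.
  move: Hbeta; rewrite /be K0' /beta.
  have -> : [set x : 'cV[F]_n | x != 0 /\ (card_ x <= 0)%N]%classic = set0.
    apply/seteqP; split => // x /= [Hx Hc]; move/negP: Hx; apply.
    apply/eqP/matrixP => i j; rewrite (ord1 j) mxE; apply/eqP.
    move: Hc; rewrite leqn0 /card_ cards_eq0 => /eqP Hs.
    have : i \notin supp x by rewrite Hs inE.
    by rewrite inE negbK.
  by rewrite image_set0 inf0 ltxx.
have GS : forall i j, j \in S -> G i j = A i j by move=> i j Hj; rewrite mxE Hj.
have GnS : forall i j, j \notin S -> G i j = 0 by move=> i j Hj; rewrite mxE (negbTE Hj).
have A_supp : forall v : 'cV[F]_n, (forall j, j \notin S -> v j 0 = 0) -> A *m v = G *m v.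
  move=> v Hv; apply/matrixP => i k; rewrite (ord1 k) !mxE; apply: eq_bigr => j _.
  by case: (boolP (j \in S)) => Hj; [rewrite GS | rewrite Hv // !mulr0].
have adjM_self : adj M = M by rewrite /M adjM adjK.
have HXe : X = M *m adj X *m X.
  by rewrite -{1}HX2 -HX4 adjM adjM_self.
have Xrow : forall p (N : 'M[F]_(n, p)) j k, j \notin S -> (X *m N) j k = 0.
  move=> p N j k Hj; rewrite HXe mxE big1 // => l _.
  rewrite mxE big1 ?mul0r // => l' _.
  rewrite mxE big1 ?mul0r // => l'' _.
  by rewrite /M mxE big1 ?mul0r // => i _; rewrite adjE GnS // rmorph0 mul0r.
have x'out : forall j, j \notin S -> x' j 0 = 0.
  by move=> j Hj; rewrite /x' -mulmxA Xrow.
have x0out : forall j, j \notin S -> x0 j 0 = 0.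
  by move=> j; rewrite inE negbK => /eqP.
have HMX : M *m (X *m adj G) = adj G.
  have H1 : M *m adj X *m M = M.
    by have := congr1 (@adjmx F cj n n) HX1; rewrite adjM (adjM M X) !adjM_self mulmxA.
  have H2 : adj (adj X *m M) = adj X *m M.
    have E : adj X *m M = adj (M *m X) by rewrite adjM adjM_self.
    by rewrite E HX3 -{1}HX3 adjK.
  have := MP_lemma (erefl M) H1 H2.
  move=> /(congr1 (@adjmx F cj m n)); rewrite adjM (adjM G) adjK adjM_self.
  done.
set r := A *m x' - b.
have Ax' : A *m x' = G *m x' by apply: A_supp.
have Ax0 : A *m x0 = G *m x0 by apply: A_supp.
have Hnorm : adj G *m r = 0.
  rewrite /r Ax' mulmxBr mulmxA -/M /x' (mulmxA M (X *m adj G)) HMX.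
  by rewrite subrr.
set h := x' - x0.
have hout : forall j, j \notin S -> h j 0 = 0.
  by move=> j Hj; rewrite [h j 0]mxE [(- x0) j 0]mxE x'out ?x0out ?subrr ?oppr0 ?addr0.
have Eeps : eps = G *m h - r.
  by rewrite /r /h Ax' /b Ax0 mulmxBr; apply: zh.
have Hpy : sq eps = sq (G *m h) + sq r.
  rewrite Eeps sqD sqN ipN reN.
  have -> : re (ip (G *m h) r) = 0.
    by rewrite re_ipC ip_adj Hnorm ip0l re0.
  by rewrite oppr0 mulr0 addr0.
have Hr : nrm r <= e.
  by apply: nrm_le_sq; rewrite Hpy lerDr sq_ge0.
have HGh : nrm (G *m h) <= e.
  by apply: nrm_le_sq; rewrite Hpy lerDl sq_ge0.
have Hch : (card_ h <= K)%N.
  rewrite /card_ -HK; apply: subset_leq_card.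
  apply/fintype.subsetP => j.
  rewrite !inE; apply: contraNN => Hj; apply/eqP; apply: hout; by rewrite inE negbK.
have Hbh : be * nrm h <= e.
  apply: le_trans (beta_le A Hch) _.
  by rewrite (A_supp h hout).
have Hh : nrm h <= e / be by rewrite ler_pdivlMr // mulrC.
have Hx'S : forall j, j \in S -> e < ab (x' j 0).
  move=> j Hj.
  have H1 := Hx0 j Hj.
  have H2 : ab (x0 j 0) <= ab (x' j 0) + ab (h j 0).
    have -> : x0 j 0 = x' j 0 + - h j 0 by rewrite /h !mxE opprB addrC subrK.
    by rewrite -(abN (h j 0)); apply: abD.
  have H3 := ab_le_nrm h j.
  have : e / be = e * be^-1 by [].
  move: H1; rewrite -/e mulrDl mul1r mulrC; lra.
have Hsupp : supp x' = S.
  apply/setP => j; rewrite [in LHS]inE.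
  case: (boolP (j \in S)) => Hj.
    apply/eqP => H0; have := Hx'S j Hj; rewrite H0 ab0; lra.
  by rewrite x'out ?eqxx.
have K0' : (0 < #|S|)%N by rewrite /S HK.
split => //.
pose dl := \big[Num.min/1]_(j | j \in S) (ab (x' j 0) - e).
have dl0 : 0 < dl.
  apply: lt_bigmin => // j Hj; rewrite subr_gt0; exact: Hx'S.
have dlle : forall j, j \in S -> dl <= ab (x' j 0) - e.
  by move=> j Hj; apply: bigmin_le_cond.
pose d := dl / (2 * (n.+1)%:R).
have Hn1 : 0 < (n.+1)%:R :> R by rewrite ltr0n.
have d0 : 0 < d by rewrite /d divr_gt0 // mulr_gt0.
have dn : d * (n.+1)%:R = dl / 2.
  rewrite /d; field; apply/negP => /eqP H; have : (0:R) <= n%:R := ler0n _ _; lra.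
have dn' : d * n%:R <= dl / 2.
  by rewrite -dn ler_pM2l // ler_nat.
have dd : d <= dl / 2.
  by rewrite -dn ler_peMr ?ler1n // ltW.
exists d => // x Hxx Hd.
set hh := x - x' in Hd.
have hh_le : forall j, ab (hh j 0) < d by move=> j; apply: le_lt_trans (ab_le_nrm hh j) Hd.
set t := e + dl / 2.
have HSx : forall j, (j \in S) = (t < ab (x j 0)).
  move=> j; case: (boolP (j \in S)) => Hj.
    have H1 := dlle j Hj; have H2 := hh_le j.
    have H3 : ab (x' j 0) <= ab (x j 0) + ab (hh j 0).
      have -> : x' j 0 = x j 0 + - hh j 0 by rewrite /hh !mxE opprB addrC subrK.
      by rewrite -(abN (hh j 0)); apply: abD.
    apply/esym; apply/idP; rewrite /t; lra.
  have E : x j 0 = hh j 0 by rewrite /hh [(x - x') j 0]mxE [(- x') j 0]mxE x'out // subr0.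
  apply/esym/negbTE; rewrite -leNgt E /t.
  have := hh_le j; lra.
have HSx' : forall j, (j \in S) = (0 < ab (x' j 0)).
  move=> j; case: (boolP (j \in S)) => Hj.
    by apply/esym; have := Hx'S j Hj; lra.
  by rewrite x'out // ab0 ltxx.
have [a [ta [Qx _]]] := Q2_bound ab_ge0 HSx K0'.
have [a' [_ [_ Qx']]] := Q2_bound ab_ge0 HSx' K0'.
rewrite /S HK in Qx Qx'.
have Qx'0 : Q2 ab K x' <= 0.
  by apply: Qx'; apply: big1 => j Hj; rewrite x'out // ab0 // expr0n.
set sig := \sum_(j | j \notin S) ab (x j 0) in Qx.
set tau := \sum_(j | j \notin S) ab (x j 0) ^+ 2 in Qx.
have tau_le : tau <= sig ^+ 2 by apply: sumsq_le_sqsum.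
have sig0 : 0 <= sig by apply: sumr_ge0.
have sig_le : sig <= dl / 2.
  apply: le_trans dn'.
  rewrite /sig big_mkcond /=.
  have -> : d * n%:R = \sum_(j < n) d by rewrite sumr_const card_ord mulr_natr.
  apply: ler_sum => j _; case: ifP => Hj; last exact: ltW.
  have E : x j 0 = hh j 0 by rewrite /hh [(x - x') j 0]mxE [(- x') j 0]mxE x'out ?Hj // subr0.
  by rewrite E; apply: ltW.
have Ex : A *m x - b = A *m hh + r by rewrite /r /hh mulmxBr addrA subrK.
set w := adj A *m r.
have wS : forall j, j \in S -> w j 0 = 0.
  move=> j Hj; have H0 : (adj G *m r) j 0 = 0 by rewrite Hnorm mxE.
  rewrite -H0.
  rewrite !mxE; apply: eq_bigr => i _; by rewrite !adjE GS.
have wle : forall j, ab (w j 0) <= e.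
  move=> j.
  have -> : w j 0 = ip (col j A) r by rewrite !mxE; apply: eq_bigr => i _; rewrite !mxE.
  apply: le_trans (ab_ip _ _) _.
  have Hc : nrm (col j A) <= 1.
    apply: le_trans Hcol; rewrite /colnorm_inf.
    exact: (le_bigmax 0 (fun i : 'I_n => nrm (col i A)) j).
  have := nrm_ge0 r; have := nrm_ge0 (col j A); nra.
have Hre : - (e * sig) <= re (ip (A *m hh) r).
  rewrite re_ipC ip_adj -/w re_ipC /ip re_sum.
  have -> : - (e * sig) = \sum_j (if j \notin S then - (e * ab (x j 0)) else 0).
    by rewrite -big_mkcond /sig mulr_sumr -sumrN.
  apply: ler_sum => j _; case: ifP => Hj.
    have E : hh j 0 = x j 0 by rewrite /hh [(x - x') j 0]mxE [(- x') j 0]mxE x'out ?Hj // subr0.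
    rewrite E.
    have H1 := re_le (x j 0) (w j 0).
    have H2 := wle j.
    have H3 := ab_ge0 (x j 0).
    move: H1; rewrite ler_norml => /andP [H1 _].
    apply: le_trans H1; rewrite lerN2 mulrC; apply: ler_pM => //.
  move/negbFE: Hj => Hj; by rewrite wS // mulr0 re0.
have HKx : Kreg ab A b K x = Q2 ab K x + sq (A *m hh) + sq r + 2 * re (ip (A *m hh) r).
  by rewrite /Kreg nrm_sq Ex sqD !addrA.
have HKx' : Kreg ab A b K x' = Q2 ab K x' + sq r by rewrite /Kreg nrm_sq.
have key : 0 < 2 * a * sig - sig ^+ 2 - sig ^+ 2 - 2 * e * sig + sq (A *m hh).
  have Hpos : 0 < a - sig - e by rewrite /t in ta; lra.
  case: (boolP (0 < sig)) => Hs.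
    have := mulr_gt0 Hs Hpos; have := sq_ge0 (A *m hh); nra.
  have s0 : sig = 0 by apply/le_anti; rewrite sig0 andbT leNgt.
  rewrite s0 expr0n /= !mulr0 !subr0 add0r.
  have hhout : forall j, j \notin S -> hh j 0 = 0.
    move=> j Hj; have : ab (x j 0) = 0.
      move/eqP: s0; rewrite psumr_eq0 // => /allP /(_ j (mem_index_enum j)).
      by rewrite Hj /= => /eqP.
    move/ab_eq0 => Hx0j.
    by rewrite /hh [(x - x') j 0]mxE [(- x') j 0]mxE x'out // Hx0j subr0.
  have Hch2 : (card_ hh <= K)%N.
    rewrite /card_ -HK; apply: subset_leq_card.
    apply/fintype.subsetP => j.
    rewrite !inE; apply: contraNN => Hj; apply/eqP; apply: hhout; by rewrite inE negbK.
  have hh0 : hh != 0 by rewrite /hh subr_eq0.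
  have := beta_le A Hch2; rewrite -/be.
  have := nrm_gt0 hh0.
  rewrite -nrm_sq => H1 H2.
  have : 0 < nrm (A *m hh) by apply: lt_le_trans H2; apply: mulr_gt0.
  move=> H3; exact: exprn_gt0.
rewrite HKx HKx'.
move: Qx; rewrite -/sig -/tau => Qx.
nra.
Qed.

End Gen.


Section Cplx.
Variable R : realType.
Local Notation ab := (@Normc.normc R).
Local Notation cj := (@conjc R).
Local Notation re := (@complex.Re R).

Lemma c_ab_ge0 (z : R[i]) : 0 <= ab z. Proof. by case: z => a b /=; apply: sqrtr_ge0. Qed.
Lemma c_ab_eq0 (z : R[i]) : ab z = 0 -> z = 0. Proof. exact: Normc.eq0_normc. Qed.
Lemma c_ab0 : ab 0 = 0. Proof. exact: Normc.normc0. Qed.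
Lemma c_abM (z w : R[i]) : ab (z * w) = ab z * ab w. Proof. exact: Normc.normcM. Qed.
Lemma c_abD (z w : R[i]) : ab (z + w) <= ab z + ab w. Proof. exact: le_normcD. Qed.
Lemma c_abcj (z : R[i]) : ab (cj z) = ab z. Proof. by case: z => a b /=; rewrite sqrrN. Qed.
Lemma c_cjK (z : R[i]) : cj (cj z) = z. Proof. exact: conjcK. Qed.
Lemma c_reD (z w : R[i]) : re (z + w) = re z + re w. Proof. by case: z; case: w. Qed.
Lemma c_re0 : re 0 = 0. Proof. by []. Qed.
Lemma c_ab_sq (z : R[i]) : ab z ^+ 2 = re z ^+ 2 + complex.Im z ^+ 2.
Proof. by case: z => a b /=; rewrite sqr_sqrtr // addr_ge0 ?sqr_ge0. Qed.
Lemma c_expand (z w : R[i]) : ab (z + w) ^+ 2 = ab z ^+ 2 + ab w ^+ 2 + 2 * re (cj z * w).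
Proof. rewrite !c_ab_sq; case: z => a b; case: w => c d /=; ring. Qed.
Lemma c_resq (z : R[i]) : re (cj z * z) = ab z ^+ 2.
Proof. rewrite c_ab_sq; case: z => a b /=; ring. Qed.
Lemma c_rele (z w : R[i]) : `|re (cj z * w)| <= ab z * ab w.
Proof.
rewrite -ler_sqr ?nnegrE ?mulr_ge0 ?c_ab_ge0 // real_normK ?num_real // exprMn !c_ab_sq.
case: z => a b; case: w => c d /=.
have : 0 <= (a * d - b * c) ^+ 2 by apply: sqr_ge0.
nra.
Qed.
End Cplx.

Section Real.
Variable R : realType.
Local Notation ab := (fun x : R => `|x|).
Lemma r_expand z w : ab (z + w) ^+ 2 = ab z ^+ 2 + ab w ^+ 2 + 2 * (z * w).
Proof. rewrite /= !real_normK ?num_real //; ring. Qed.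
Lemma r_resq (z : R) : z * z = ab z ^+ 2.
Proof. by rewrite /= real_normK ?num_real // expr2. Qed.
Lemma r_rele (z w : R) : `|z * w| <= ab z * ab w.
Proof. by rewrite normrM. Qed.
End Real.

Definition cjR (R : realType) : {rmorphism R -> R} := idfun.
Definition cjC (R : realType) : {rmorphism R[i] -> R[i]} := (@conjc R).

Theorem proposition5p6 (R : realType) :
  prop56_stmt (fun x : R => `|x|) (fun x : R => x) /\
  prop56_stmt (@Normc.normc R) (@conjc R).
Proof.
split.
  apply: (@gen_main R R (fun x : R => `|x|) (cjR R) (fun x : R => x)).
  - by move=> z; apply: normr_ge0.
  - by move=> z /eqP; rewrite normr_eq0 => /eqP.
  - exact: normr0.
  - by move=> z w; apply: normrM.
  - by move=> z w; apply: ler_normD.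
  - by move=> z; apply: normrN.
  - by [].
  - by [].
  - by [].
  - by [].
  - exact: r_expand.
  - by move=> z; rewrite /= -r_resq.
  - exact: r_rele.
apply: (@gen_main R R[i] (@Normc.normc R) (cjC R) (@complex.Re R)).
- exact: c_ab_ge0.
- exact: c_ab_eq0.
- exact: c_ab0.
- exact: c_abM.
- exact: c_abD.
- exact: normcN.
- exact: c_abcj.
- exact: c_cjK.
- exact: c_reD.
- exact: c_re0.
- exact: c_expand.
- exact: c_resq.
- exact: c_rele.
Qed.
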